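(* Let $g>0$, $H>0$, $l\in(0,1)$, $u_1,u_2\in\mathbb{R}$, and let $u\in\{u_1,u_2\}$. Define $$M=\begin{pmatrix}1&0&0\\-u&1&0\\-u&0&1\end{pmatrix},\qquad A=\begin{pmatrix}0&l&1-l\\ gH-u_1^2&2u_1-u&0\\ gH-u_2^2&0&2u_2-u\end{pmatrix}.$$ Then $M^{-1}A$ has three distinct real eigenvalues (equivalently, $x\mapsto\det(A-xM)$ has three distinct real roots). Consequently the two-layer system below, written in the quasilinear form $M(X)\partial_t X+A(X)\partial_x X=S(X)$ with $X=(H,q_1,q_2)^T$, $q_i=Hu_i$, is strictly hyperbolic whenever $H>0$.
   Context: The two-layer multilayer Saint-Venant system with mass exchange (layer thicknesses $h_1=lH$, $h_2=(1-l)H$, $l\in(0,1)$ fixed) reads $$\partial_t H+l\,\partial_x(Hu_1)+(1-l)\,\partial_x(Hu_2)=0,$$ $$\partial_t(Hu_1)+\partial_x(Hu_1^2)+\tfrac g2\partial_x(H^2)=-gH\partial_x z_b+u\big(\partial_t H+\partial_x(Hu_1)\big)-H\partial_x p^a+\tfrac{2\nu}{lH}(u_2-u_1)-\tilde\kappa\,u_1,$$ $$\partial_t(Hu_2)+\partial_x(Hu_2^2)+\tfrac g2\partial_x(H^2)=-gH\partial_x z_b+u\big(\partial_t H+\partial_x(Hu_2)\big)-\tfrac{2\nu}{(1-l)H}(u_2-u_1)-H\partial_x p^a,$$ where $H$ is the total water height, $u_1,u_2$ the layer velocities, $z_b$ the bottom, $p^a$ the atmospheric pressure, $\nu,\tilde\kappa\ge0$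 viscosity and friction coefficients, and $u=u_{3/2}$ is the interface velocity, which is taken equal to $u_1$ or $u_2$ by upwinding according to the sign of the mass exchange between the layers. The source terms (not involving derivatives of the unknowns) form $S(X)$. *)

(* Defs.v *)
From HB Require Import structures.
From mathcomp Require Import all_boot all_order all_algebra.
From mathcomp Require Import reals.
Set Implicit Arguments. Unset Strict Implicit. Unset Printing Implicit Defensive.
Import Order.TTheory GRing.Theory Num.Theory.
Local Open Scope ring_scope.

Definition mx3 (R : realType) (a11 a12 a13 a21 a22 a23 a31 a32 a33 : R) : 'M[R]_3 :=
  \matrix_(i < 3, j < 3)
    nth 0 (nth [::] [:: [:: a11; a12; a13]; [:: a21; a22; a23]; [:: a31; a32; a33]] i) j.

Definition Mmat (R : realType) (u : R) : 'M[R]_3 :=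
  mx3 1 0 0 (- u) 1 0 (- u) 0 1.

Definition Amat (R : realType) (g H l u1 u2 u : R) : 'M[R]_3 :=
  mx3 0 l (1 - l)
      (g * H - u1 ^+ 2) (2 * u1 - u) 0
      (g * H - u2 ^+ 2) 0 (2 * u2 - u).

(* Main.v *)
Require Import Defs.
From HB Require Import structures.
From mathcomp Require Import all_boot all_order all_algebra.
From mathcomp Require Import reals.
From mathcomp Require Import ring lra.
Import Order.TTheory GRing.Theory Num.Theory.
Local Open Scope ring_scope.

Section S.
Variable R : realType.

Lemma mul_mx3 (a11 a12 a13 a21 a22 a23 a31 a32 a33 b11 b12 b13 b21 b22 b23 b31 b32 b33 : R) :
  mx3 a11 a12 a13 a21 a22 a23 a31 a32 a33 *m mx3 b11 b12 b13 b21 b22 b23 b31 b32 b33 =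
  mx3 (a11*b11+a12*b21+a13*b31) (a11*b12+a12*b22+a13*b32) (a11*b13+a12*b23+a13*b33)
      (a21*b11+a22*b21+a23*b31) (a21*b12+a22*b22+a23*b32) (a21*b13+a22*b23+a23*b33)
      (a31*b11+a32*b21+a33*b31) (a31*b12+a32*b22+a33*b32) (a31*b13+a32*b23+a33*b33).
Proof.
apply/matrixP => i j; rewrite !mxE !big_ord_recr big_ord0 /= !mxE add0r.
by case: i => [[|[|[|i]]] Hi] //; case: j => [[|[|[|j]]] Hj].
Qed.

Lemma scal_sub_mx3 (x a11 a12 a13 a21 a22 a23 a31 a32 a33 : R) :
  x%:M - mx3 a11 a12 a13 a21 a22 a23 a31 a32 a33 =
  mx3 (x - a11) (- a12) (- a13) (- a21) (x - a22) (- a23) (- a31) (- a32) (x - a33).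
Proof.
apply/matrixP => i j; rewrite !mxE.
by case: i => [[|[|[|i]]] Hi] //; case: j => [[|[|[|j]]] Hj] //=; rewrite ?subr0 ?sub0r ?mulr1n ?mulr0n.
Qed.

Lemma mx3_one : mx3 1 0 0 0 1 0 0 0 (1 : R) = 1%:M.
Proof.
apply/matrixP => i j; rewrite !mxE.
by case: i => [[|[|[|i]]] Hi] //; case: j => [[|[|[|j]]] Hj].
Qed.
Definition G (m l d k s : R) := m*s*((s-d)^+2-k) + l*(s^+2-k)*(s-2*d).

Definition P (m l d k : R) : {poly R} :=
  m *: ('X * (('X - d%:P)^+2 - k%:P)) + l *: (('X ^+ 2 - k%:P) * ('X - (2*d)%:P)).

Lemma PE m l d k s : (P m l d k).[s] = G m l d k s.
Proof. by rewrite /P /G !hornerE. Qed.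

Lemma ivt_pos (p : {poly R}) a b : a <= b -> p.[a] < 0 -> 0 < p.[b] ->
  exists2 x, a < x < b & root p x.
Proof.
move=> ab ha hb; have [|x /andP[ax xb] rx] := @poly_ivt _ p a b ab.
  by rewrite (ltW ha) (ltW hb).
exists x => //; move/rootP: (rx) => px.
have xa : a != x by apply/eqP=> E; move: ha; rewrite E px ltxx.
have xb' : x != b by apply/eqP=> E; move: hb; rewrite -E px ltxx.
by rewrite lt_neqAle xa ax lt_neqAle xb' xb.
Qed.

Lemma ivt_neg (p : {poly R}) a b : a <= b -> 0 < p.[a] -> p.[b] < 0 ->
  exists2 x, a < x < b & root p x.
Proof.
move=> ab ha hb; have [||x hx rx] := @ivt_pos (- p) a b ab; rewrite ?hornerN ?oppr_lt0 ?oppr_gt0 //.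
by exists x => //; rewrite rootN in rx.
Qed.

Lemma three_roots (p : {poly R}) (t1 t2 t3 t4 : R) : t1 <= t2 -> t2 <= t3 -> t3 <= t4 ->
  p.[t1] < 0 -> 0 < p.[t2] -> p.[t3] < 0 -> 0 < p.[t4] ->
  exists a b c, [/\ a < b, b < c, root p a, root p b & root p c].
Proof.
move=> h1 h2 h3 s1 s2 s3 s4.
have [a /andP[_ a2] ra] := ivt_pos _ _ _ h1 s1 s2.
have [b /andP[b1 b2] rb] := ivt_neg _ _ _ h2 s2 s3.
have [c /andP[c1 _] rc] := ivt_pos _ _ _ h3 s3 s4.
exists a, b, c; split => //; lra.
Qed.

Lemma G_roots_pos (m l d k : R) : 0 < m -> 0 < l -> m + l = 1 -> 0 < k -> 0 < d ->
  exists a b c, [/\ a < b, b < c, G m l d k a = 0, G m l d k b = 0 & G m l d k c = 0].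
Proof.
move=> hm hl hml hk hd.
set r := Num.sqrt k.
have hr : 0 < r by rewrite sqrtr_gt0.
have hk' : k = r ^+ 2 by rewrite sqr_sqrtr // ltW.
have s1 : (P m l d k).[- r] < 0.
  rewrite PE /G hk'.
  have -> : m * - r * ((- r - d) ^+ 2 - r ^+ 2) + l * ((- r) ^+ 2 - r ^+ 2) * (- r - 2 * d)
     = - (m * r * d * (d + 2 * r)) by ring.
  rewrite oppr_lt0 !mulr_gt0 //; lra.
have s2 : 0 < (P m l d k).[0].
  rewrite PE /G.
  have -> : m * 0 * ((0 - d) ^+ 2 - k) + l * (0 ^+ 2 - k) * (0 - 2 * d) = 2 * (l * k * d) by ring.
  rewrite !mulr_gt0 //; lra.
have s4 : 0 < (P m l d k).[2 * d + 2 * r].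
  rewrite PE /G hk'.
  have -> : m * (2 * d + 2 * r) * ((2 * d + 2 * r - d) ^+ 2 - r ^+ 2) +
    l * ((2 * d + 2 * r) ^+ 2 - r ^+ 2) * (2 * d + 2 * r - 2 * d)
     = m * (2 * d + 2 * r) * ((d + r) * (d + 3 * r)) + l * ((2*d + r) * (2 * d + 3 * r)) * (2 * r) by ring.
  rewrite addr_gt0 // !mulr_gt0 //; lra.
have [t [t0 tlt s3]] : exists t, [/\ 0 <= t, t <= 2 * d + 2 * r & (P m l d k).[t] < 0].
  have [hd2|hd2] := ltP d (2 * r).
    exists r; split; [lra|lra|].
    rewrite PE /G hk'.
    have -> : m * r * ((r - d) ^+ 2 - r ^+ 2) + l * (r ^+ 2 - r ^+ 2) * (r - 2 * d)
      = - (m * r * d * (2 * r - d)) by ring.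
    rewrite oppr_lt0 !mulr_gt0 //; lra.
  exists (d + r); split; [lra|lra|].
  rewrite PE /G hk'.
  have -> : m * (d + r) * ((d + r - d) ^+ 2 - r ^+ 2) + l * ((d + r) ^+ 2 - r ^+ 2) * (d + r - 2 * d)
      = - (l * d * (d + 2 * r) * (d - r)) by ring.
  rewrite oppr_lt0 !mulr_gt0 //; lra.
have h1 : - r <= 0 by lra.
have h2 : (0:R) <= t by lra.
have [a [b [c [ab bc ra rb rc]]]] := three_roots _ _ _ _ _ h1 h2 tlt s1 s2 s3 s4.
by exists a, b, c; split => //; rewrite -PE; apply/rootP.
Qed.

Lemma G_roots (m l d k : R) : 0 < m -> 0 < l -> m + l = 1 -> 0 < k ->
  exists a b c, [/\ a < b, b < c, G m l d k a = 0, G m l d k b = 0 & G m l d k c = 0].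
Proof.
move=> hm hl hml hk.
have [hd|hd|->] := ltgtP d 0; last first.
- set r := Num.sqrt k.
  have hr : 0 < r by rewrite sqrtr_gt0.
  have hk' : k = r ^+ 2 by rewrite sqr_sqrtr // ltW.
  exists (- r), 0, r; split; [lra|lra| | |]; rewrite /G hk'.
  + have -> : l = 1 - m by lra. ring.
  + ring.
  + have -> : l = 1 - m by lra. ring.
- exact: G_roots_pos.
- have hd' : 0 < - d by rewrite oppr_gt0.
  have [a [b [c [ab bc ra rb rc]]]] := G_roots_pos _ _ _ _ hm hl hml hk hd'.
  exists (- c), (- b), (- a); split; try lra.
  + by move: rc; rewrite /G => E; rewrite -[RHS]oppr0 -E; ring.
  + by move: rb; rewrite /G => E; rewrite -[RHS]oppr0 -E; ring.
  + by move: ra; rewrite /G => E; rewrite -[RHS]oppr0 -E; ring.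
Qed.
Lemma det_mx3 (a11 a12 a13 a21 a22 a23 a31 a32 a33 : R) :
  \det (mx3 a11 a12 a13 a21 a22 a23 a31 a32 a33) =
  a11 * (a22 * a33 - a23 * a32) - a12 * (a21 * a33 - a23 * a31) + a13 * (a21 * a32 - a22 * a31).
Proof.
rewrite (expand_det_row _ 0) !big_ord_recr big_ord0 /= /cofactor.
rewrite !(expand_det_row _ 0) !big_ord_recr big_ord0 /= /cofactor.
rewrite !det_mx11 !mxE /= !big_ord0 /= ?expr0 ?expr1 ?expr2 ?sqrrN ?expr1n; rewrite ?mulr0 ?addr0 ?mulr1 ?mulN1r ?mul1r ?add0r.
ring.
Qed.
Lemma invM (u : R) : invmx (Mmat u) = mx3 1 0 0 u 1 0 u 0 1.
Proof.
have h1 : mx3 1 0 0 u 1 0 u 0 1 *m Mmat u = 1%:M.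
  rewrite /Mmat mul_mx3 -mx3_one; congr mx3; ring.
have hU : Mmat u \in unitmx.
  by rewrite unitmxE /Mmat det_mx3 !(mulr0, mulr1, subr0, sub0r, addr0, mul0r) unitr1.
by rewrite -[RHS]mulmx1 -(mulmxV hU) mulmxA h1 mul1mx.
Qed.

Lemma eig_of_det (B : 'M[R]_3) x : \det (x%:M - B) = 0 -> eigenvalue B x.
Proof.
move=> /eqP /det0P [v v0 hv]; apply/eigenvalueP; exists v => //.
move: hv; rewrite mulmxBr mul_mx_scalar => /eqP; rewrite subr_eq0 => /eqP <-.
by [].
Qed.

End S.

Theorem mainTheorem2 (R : realType) (g H l u1 u2 u : R) :
  0 < g -> 0 < H -> 0 < l < 1 -> (u = u1 \/ u = u2) ->
  exists a b c : R,
    [/\ a != b, a != c, b != c &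
      [/\ eigenvalue (invmx (Mmat u) *m Amat g H l u1 u2 u) a,
          eigenvalue (invmx (Mmat u) *m Amat g H l u1 u2 u) b &
          eigenvalue (invmx (Mmat u) *m Amat g H l u1 u2 u) c]].
Proof.
move=> hg hH /andP[hl0 hl1] hu.
have hk : 0 < g * H by rewrite mulr_gt0.
case: hu => hu; subst u.
- have [||||a [b [c [ab bc ra rb rc]]]] := @G_roots R (1 - l) l (u2 - u1) (g * H); try lra.
  have key : forall s, G _ (1 - l) l (u2 - u1) (g * H) s = 0 ->
     eigenvalue (invmx (Mmat u1) *m Amat g H l u1 u2 u1) (u1 + s).
    move=> s hs; apply: eig_of_det; rewrite invM /Amat mul_mx3 scal_sub_mx3 det_mx3 -[RHS]hs /G; ring.
  exists (u1 + a), (u1 + b), (u1 + c); split; try (apply/eqP => E; lra).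
  by split; apply: key.
- have [||||a [b [c [ab bc ra rb rc]]]] := @G_roots R l (1 - l) (u1 - u2) (g * H); try lra.
  have key : forall s, G _ l (1 - l) (u1 - u2) (g * H) s = 0 ->
     eigenvalue (invmx (Mmat u2) *m Amat g H l u1 u2 u2) (u2 + s).
    move=> s hs; apply: eig_of_det; rewrite invM /Amat mul_mx3 scal_sub_mx3 det_mx3 -[RHS]hs /G; ring.
  exists (u2 + a), (u2 + b), (u2 + c); split; try (apply/eqP => E; lra).
  by split; apply: key.
Qed.
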